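(* Let $n>0$ be a natural number and let $A=pqs(n,cs',us',ds')$ be an atom (possibly non-ground) such that $cs'$ is a list of length $n$ and every ground instance of $A$ belongs to $S$. Then $cs'$ is a list of distinct members whose members are exactly $1,\dots,n$, and it is a solution of the $n$ queens problem: placing, for each $j\in\{1,\dots,n\}$, the queen of row $j$ in column $k$ where $j$ is the $k$-th member of $cs'$, no two queens share a row, a column, or a diagonal (i.e. for distinct $j,j'$ in columns $k,k'$ one has $k\ne k'$, $k+j\ne k'+j'$ and $k-j\ne k'-j'$). In particular, since NQUEENS is correct w.r.t. $S$, this holds for every answer of NQUEENS that is an instance of a query $pqs(n,q_0,X,Y)$ with $q_0$ a list of $n$ distinct variables.
   Context: Terms are built over a fixed alphabet containing the constant $0$, the unary symbol $s$, the list constant $[\,]$ and the binary list constructor $[\cdot|\cdot]$; $\mathcal{HU}$ is the set of ground terms and $\mathcal{HB}$ the set of ground atoms. A natural number $i$ is identified with the term $s^i(0)$. Prolog list notation is used: $[e_1,\dots,e_n|e]$ stands for $e$ when $n=0$, and a list of length $n$ is a term $[e_1,\dots,e_n]$. A term $e$ is the $k$-th member of a term $t$ ($k\ge 1$) if $t=[e_1,\dots,e_{k-1},e|e']$ for some terms $e_1,\dots,e_{k-1},e'$; $e$ is a member of $t$ if it is its $k$-th member for some $k$. A list of distinct members is a list whose elements are pairwise distinct. The program NQUEENS consists of the definite clauses (capitalized names are variables): (C1) $pqs(0,X_1,X_2,X_3)$. (C2) $pqs(s(I),Cs,Us,[X|Ds]) \gets pqs(I,Cs,[Y|Us],Ds),\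 pq(s(I),Cs,Us,Ds)$. (C3) $pq(I,[I|X_1],[I|X_2],[I|X_3])$. (C4) $pq(I,[X_1|Cs],[X_2|Us],[X_3|Ds]) \gets pq(I,Cs,Us,Ds)$. An answer of a program $P$ is a query $Q$ with $P\models Q$. A program $P$ is correct w.r.t. a set $S\subseteq\mathcal{HB}$ if its least Herbrand model is contained in $S$. If a number $j$ is the $k$-th member of a list $cs$, the up-diagonal number of $j$ w.r.t. $i$ in $cs$ is $k+j-i$ and the down-diagonal number is $k+i-j$. A triple $(cs,us,ds)$ of terms is correct up to $m$ w.r.t. $i$ when $0\le m\le i$ and: $cs$ is a list of distinct members and each $j\in\{1,\dots,m\}$ is a member of $cs$; the up-diagonal numbers of $1,\dots,m$ in $cs$ are pairwise distinct, and likewise the down-diagonal numbers; and for each $j\in\{1,\dots,m\}$, if the up-diagonal (resp. down-diagonal) number of $j$ w.r.t. $i$ in $cs$ is $l>0$, then the $l$-th member of $us$ (resp. $ds$) is $j$. Specifications: $S_{pq}=\{pq(i,[c_1,\dots,c_k,i|c],[u_1,\dots,u_k,i|u],[d_1,\dots,d_k,i|d])\in\mathcal{HB}\mid k\ge0\}$; $S_{pqs}=\{pqs(0,cs,us,ds)\mid cs,us,ds\in\mathcal{HU}\}\cup\{pqs(i,cs,us,[t|ds])\in\mathcal{HB}\mid i>0$, $1,\dots,i$ are members of $cs$, and if $cs$ is a list of distinct members then $(cs,us,ds)$ is correct up to $i$ w.r.t. $i\}$; $S=S_{pq}\cup S_{pqs}$. *)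

(* Defs.v *)
From Stdlib Require Import List Arith Lia ZArith.
Import ListNotations.

Inductive term : Type :=
  | Var  : nat -> term
  | Zero : term
  | Succ : term -> term
  | Nil  : term
  | Cons : term -> term -> term.

Fixpoint ground (t : term) : Prop :=
  match t with
  | Var _ => False
  | Zero | Nil => True
  | Succ u => ground u
  | Cons a b => ground a /\ ground b
  end.

Fixpoint subst (sigma : nat -> term) (t : term) : term :=
  match t with
  | Var v => sigma v
  | Zero => Zero
  | Succ u => Succ (subst sigma u)
  | Nil => Nil
  | Cons a b => Cons (subst sigma a) (subst sigma b)
  end.

Definition ground_subst (sigma : nat -> term) : Prop :=
  forall v, ground (sigma v).

Inductive atom : Type :=
  | Pqs : term -> term -> term -> term -> atom
  | Pq  : term -> term -> term -> term -> atom.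

Definition ground_atom (A : atom) : Prop :=
  match A with
  | Pqs a b c d | Pq a b c d => ground a /\ ground b /\ ground c /\ ground d
  end.

Definition subst_atom (sigma : nat -> term) (A : atom) : atom :=
  match A with
  | Pqs a b c d => Pqs (subst sigma a) (subst sigma b) (subst sigma c) (subst sigma d)
  | Pq a b c d => Pq (subst sigma a) (subst sigma b) (subst sigma c) (subst sigma d)
  end.

Definition instance_of (B A : atom) : Prop :=
  exists sigma, B = subst_atom sigma A.

Fixpoint num (i : nat) : term :=
  match i with
  | O => Zero
  | S j => Succ (num j)
  end.

(** Prolog list notation [e1,...,en|e]. *)
Fixpoint lst (es : list term) (tl : term) : term :=
  match es with
  | [] => tl
  | e :: es' => Cons e (lst es' tl)
  end.

Definition is_list_of_length (t : term) (n : nat) : Prop :=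
  exists es, length es = n /\ t = lst es Nil.

Definition kth_member (k : nat) (e t : term) : Prop :=
  1 <= k /\ exists es e', length es = k - 1 /\ t = lst (es ++ [e]) e'.

Definition member (e t : term) : Prop := exists k, kth_member k e t.

Definition distinct_list (t : term) : Prop :=
  (exists es, t = lst es Nil) /\
  (forall k k' e e', kth_member k e t -> kth_member k' e' t -> k <> k' -> e <> e').

Definition up_diag (k j i : nat) : Z := (Z.of_nat k + Z.of_nat j - Z.of_nat i)%Z.
Definition down_diag (k j i : nat) : Z := (Z.of_nat k + Z.of_nat i - Z.of_nat j)%Z.

Definition correct_up_to (cs us ds : term) (m i : nat) : Prop :=
  m <= i /\
  distinct_list cs /\
  (forall j, 1 <= j <= m -> member (num j) cs) /\
  (forall j j' k k', 1 <= j <= m -> 1 <= j' <= m -> j <> j' ->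
     kth_member k (num j) cs -> kth_member k' (num j') cs ->
     up_diag k j i <> up_diag k' j' i) /\
  (forall j j' k k', 1 <= j <= m -> 1 <= j' <= m -> j <> j' ->
     kth_member k (num j) cs -> kth_member k' (num j') cs ->
     down_diag k j i <> down_diag k' j' i) /\
  (forall j k, 1 <= j <= m -> kth_member k (num j) cs ->
     (0 < up_diag k j i)%Z -> kth_member (Z.to_nat (up_diag k j i)) (num j) us) /\
  (forall j k, 1 <= j <= m -> kth_member k (num j) cs ->
     (0 < down_diag k j i)%Z -> kth_member (Z.to_nat (down_diag k j i)) (num j) ds).

Definition in_S_pq (A : atom) : Prop :=
  ground_atom A /\
  match A with
  | Pq i cs us ds =>
      exists k, kth_member (S k) i cs /\ kth_member (S k) i us /\ kth_member (S k) i ds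
  | _ => False
  end.

Definition in_S_pqs (A : atom) : Prop :=
  ground_atom A /\
  match A with
  | Pqs a cs us dds =>
      a = Zero \/
      exists i t ds, 0 < i /\ a = num i /\ dds = Cons t ds /\
        (forall j, 1 <= j <= i -> member (num j) cs) /\
        (distinct_list cs -> correct_up_to cs us ds i i)
  | _ => False
  end.

Definition in_S (A : atom) : Prop := in_S_pq A \/ in_S_pqs A.

Record clause : Type := mkClause { head : atom ; body : list atom }.
Definition program := list clause.

Inductive least_herbrand_model (P : program) : atom -> Prop :=
  | lhm_step : forall c sigma, In c P -> ground_subst sigma ->
      (forall b, In b (body c) -> least_herbrand_model P (subst_atom sigma b)) ->
      least_herbrand_model P (subst_atom sigma (head c)).

Definition herbrand_model (P : program) (I : atom -> Prop) : Prop :=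
  forall c sigma, In c P -> ground_subst sigma ->
    (forall b, In b (body c) -> I (subst_atom sigma b)) ->
    I (subst_atom sigma (head c)).

(** Q is an answer of P: P |= Q (Q read universally closed), evaluated over
    Herbrand interpretations: every ground instance of Q is true in every
    Herbrand model of P. *)
Definition answer (P : program) (Q : atom) : Prop :=
  forall I, herbrand_model P I ->
    forall sigma, ground_subst sigma -> I (subst_atom sigma Q).

Definition correct_wrt (P : program) (Sp : atom -> Prop) : Prop :=
  forall A, least_herbrand_model P A -> Sp A.

Definition vX1 := Var 0. Definition vX2 := Var 1. Definition vX3 := Var 2.
Definition vI := Var 3. Definition vCs := Var 4. Definition vUs := Var 5.
Definition vX := Var 6. Definition vDs := Var 7. Definition vY := Var 8.

Definition NQUEENS : program :=
  [ mkClause (Pqs Zero vX1 vX2 vX3) [];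
    mkClause (Pqs (Succ vI) vCs vUs (Cons vX vDs))
               [Pqs vI vCs (Cons vY vUs) vDs; Pq (Succ vI) vCs vUs vDs];
    mkClause (Pq vI (Cons vI vX1) (Cons vI vX2) (Cons vI vX3)) [];
    mkClause (Pq vI (Cons vX1 vCs) (Cons vX2 vUs) (Cons vX3 vDs))
               [Pq vI vCs vUs vDs] ].

(** cs is a solution of the n queens problem: queen of row j is in the
    column k where j is the k-th member of cs. *)
Definition nqueens_solution (cs : term) (n : nat) : Prop :=
  forall j j' k k', 1 <= j <= n -> 1 <= j' <= n -> j <> j' ->
    kth_member k (num j) cs -> kth_member k' (num j') cs ->
    k <> k' /\ k + j <> k' + j' /\
    (Z.of_nat k - Z.of_nat j <> Z.of_nat k' - Z.of_nat j')%Z.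

Definition nqueens_conclusion (cs : term) (n : nat) : Prop :=
  distinct_list cs /\
  (forall e, member e cs <-> exists j, 1 <= j <= n /\ e = num j) /\
  nqueens_solution cs n.

(* Main.v *)
Require Import Defs.
From Stdlib Require Import List Arith Lia ZArith FinFun.
Import ListNotations.

Fixpoint getm (k : nat) (t : term) : option term :=
  match k with
  | 0 => None
  | S k' => match t with
            | Cons a b => match k' with 0 => Some a | _ => getm k' b end
            | _ => None end
  end.

Lemma kth_iff k e t : kth_member k e t <-> getm k t = Some e.
Proof.
  split.
  - intros [Hk [es [e' [Hl ->]]]].
    revert k Hk Hl. induction es as [|a es IH]; intros k Hk Hl; simpl in *.
    + destruct k as [|[|k]]; simpl in *; try lia. reflexivity.
    + destruct k as [|[|k]]; simpl in *; try lia. exact (IH (S k) ltac:(lia) ltac:(lia)).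
  - revert t. induction k as [|k IH]; intros t H; simpl in H; try discriminate.
    destruct t; try discriminate. destruct k as [|k].
    + inversion H; subst. split; [lia|]. exists [], t2. simpl; auto.
    + destruct (IH _ H) as [_ [es [e' [Hl Ht]]]].
      split; [lia|]. exists (t1 :: es), e'. simpl. split; [lia|]. now rewrite Ht.
Qed.

Lemma kth_fun k e e' t : kth_member k e t -> kth_member k e' t -> e = e'.
Proof. rewrite !kth_iff. intros H1 H2. rewrite H1 in H2. now inversion H2. Qed.

Lemma kth_pos k e t : kth_member k e t -> 1 <= k.
Proof. intros [H _]. exact H. Qed.

Lemma kthSS m e a t : kth_member (S (S m)) e (Cons a t) <-> kth_member (S m) e t.
Proof. rewrite !kth_iff. simpl. tauto. Qed.

Lemma kth1 a b : kth_member 1 a (Cons a b).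
Proof. rewrite kth_iff. reflexivity. Qed.

Lemma getm_lst k es : getm (S k) (lst es Nil) = nth_error es k.
Proof.
  revert k; induction es as [|a es IH]; intros k; simpl.
  - destruct k; reflexivity.
  - destruct k; simpl; auto. rewrite <- IH. reflexivity.
Qed.

Lemma kth_lst k e es : kth_member (S k) e (lst es Nil) <-> nth_error es k = Some e.
Proof. rewrite kth_iff, getm_lst. tauto. Qed.

Lemma member_lst e es : member e (lst es Nil) <-> In e es.
Proof.
  split.
  - intros [k Hk]. pose proof (kth_pos _ _ _ Hk). destruct k; [lia|].
    apply kth_lst in Hk. eapply nth_error_In; eauto.
  - intros H. apply In_nth_error in H as [k Hk]. exists (S k). now apply kth_lst.
Qed.

Lemma dist_pos t k k' e : distinct_list t -> kth_member k e t -> kth_member k' e t -> k = k'.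
Proof.
  intros [_ H] H1 H2. destruct (Nat.eq_dec k k'); auto.
  exfalso. exact (H _ _ _ _ H1 H2 n eq_refl).
Qed.

Lemma num_inj j j' : num j = num j' -> j = j'.
Proof. revert j'; induction j; destruct j'; simpl; intros H; inversion H; auto. Qed.

Lemma subst_num s j : subst s (num j) = num j.
Proof. induction j; simpl; congruence. Qed.

Lemma subst_lst s es t : subst s (lst es t) = lst (map (subst s) es) (subst s t).
Proof. induction es; simpl; congruence. Qed.

Lemma ground_subst_t s t : ground_subst s -> ground (subst s t).
Proof. intros Hs; induction t; simpl; auto. Qed.

Definition sN : nat -> term := fun _ => Nil.

Lemma sN_num t j : subst sN t = num j -> t = num j.
Proof.
  revert t; induction j; intros t H; destruct t; simpl in *; try discriminate; auto.
  injection H as H; f_equal; apply IHj; exact H.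
Qed.
Lemma dummy0 : True.
Proof.
  exact I.
Qed.

Lemma part1 : forall (n : nat) (cs' us' ds' : term),
     0 < n ->
     is_list_of_length cs' n ->
     (forall sigma, ground_subst sigma ->
        in_S (subst_atom sigma (Pqs (num n) cs' us' ds'))) ->
     nqueens_conclusion cs' n.
Proof.
  intros n cs us ds Hn [es [Hlen ->]] Hs.
  specialize (Hs sN ltac:(intro; exact I)).
  destruct Hs as [[_ []] | [_ Hs]]. simpl in Hs.
  rewrite subst_num in Hs.
  destruct Hs as [Hz | [i [t [ds' [Hi [Hni [_ [Hmem Hcor]]]]]]]].
  { destruct n; simpl in Hz; [lia|discriminate]. }
  apply num_inj in Hni; subst i.
  rewrite subst_lst in Hmem, Hcor. simpl in Hmem, Hcor.
  set (L := map num (seq 1 n)).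
  assert (HL : NoDup L).
  { apply FinFun.Injective_map_NoDup. intros a b; apply num_inj. apply seq_NoDup. }
  assert (Hinc : incl L (map (subst sN) es)).
  { intros e He. unfold L in He. apply in_map_iff in He as [j [<- Hj]].
    apply in_seq in Hj. apply member_lst, Hmem. lia. }
  assert (Hlen2 : length (map (subst sN) es) <= length L).
  { unfold L. rewrite !length_map, length_seq. lia. }
  assert (Hinc2 : incl (map (subst sN) es) L) by (apply NoDup_length_incl; assumption).
  assert (Hes : forall e, In e es -> exists j, 1 <= j <= n /\ e = num j).
  { intros e He. assert (In (subst sN e) L) by (apply Hinc2, in_map; auto).
    unfold L in H. apply in_map_iff in H as [j [Hj1 Hj2]]. apply in_seq in Hj2.
    exists j. split; [lia|]. symmetry in Hj1. now apply sN_num. }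
  assert (Hmap : map (subst sN) es = es).
  { rewrite <- (map_id es) at 2. apply map_ext_in. intros e He.
    destruct (Hes e He) as [j [_ ->]]. apply subst_num. }
  rewrite Hmap in Hinc, Hinc2, Hcor, Hlen2.
  assert (Hnd : NoDup es) by exact (NoDup_incl_NoDup HL Hlen2 Hinc).
  assert (Hd : distinct_list (lst es Nil)).
  { split; [eauto|]. intros k k' e e' H1 H2 Hne Heq; subst e'.
    pose proof (kth_pos _ _ _ H1). pose proof (kth_pos _ _ _ H2).
    destruct k; [lia|]; destruct k'; [lia|].
    apply kth_lst in H1, H2. apply Hne. f_equal.
    eapply (proj1 (NoDup_nth_error _) Hnd). apply nth_error_Some. congruence. congruence. }
  specialize (Hcor Hd) as [_ [_ [_ [Hup [Hdown _]]]]].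
  split; [exact Hd|split].
  - intros e. rewrite member_lst. split.
    + apply Hes.
    + intros [j [Hj ->]]. apply Hinc. unfold L. apply in_map, in_seq. lia.
  - intros j j' k k' Hj Hj' Hne H1 H2. split; [|split].
    + intros ->. apply Hne, num_inj. eapply kth_fun; eauto.
    + specialize (Hup _ _ _ _ Hj Hj' Hne H1 H2). unfold up_diag in Hup. lia.
    + specialize (Hdown _ _ _ _ Hj Hj' Hne H1 H2). unfold down_diag in Hdown. lia.
Qed.

Lemma S_model : herbrand_model NQUEENS in_S.
Proof.
  intros c s Hin Hg Hb.
  assert (G : forall t, ground (subst s t)) by (intro; now apply ground_subst_t).
  simpl in Hin. destruct Hin as [<-|[<-|[<-|[<-|[]]]]]; simpl in *.
  - right. split; [simpl; auto|]. left; reflexivity.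
  -
    assert (B1 := Hb _ (or_introl eq_refl)). assert (B2 := Hb _ (or_intror (or_introl eq_refl))).
    simpl in B1, B2.
    destruct B2 as [[_ [k0 [Hc [Hu Hd]]]] | [_ []]].
    destruct B1 as [[_ []] | [_ B1]].
    right. split; [simpl; auto|]. right.
    set (cs := s 4) in *. set (us := s 5) in *. set (ds := s 7) in *.
    destruct B1 as [Hz | [i [t [ds'' [Hi [Hni [Hdd [Hmem Hcor]]]]]]]].
    + rewrite Hz in *. exists 1, (s 6), ds. split; [lia|]. split; [reflexivity|]. split; [reflexivity|].
      split.
      { intros j Hj. replace j with 1 by lia. exists (S k0). exact Hc. }
      intros Hdist. split; [lia|]. split; [exact Hdist|].
      split. { intros j Hj. replace j with 1 by lia. exists (S k0). exact Hc. }
      split. { intros; lia. } split. { intros; lia. }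
      split.
      * intros j k Hj Hk _. replace j with 1 in * by lia.
        assert (k = S k0) by (eapply dist_pos; eauto). subst k.
        unfold up_diag. replace (Z.to_nat _) with (S k0) by lia. exact Hu.
      * intros j k Hj Hk _. replace j with 1 in * by lia.
        assert (k = S k0) by (eapply dist_pos; eauto). subst k.
        unfold down_diag. replace (Z.to_nat _) with (S k0) by lia. exact Hd.
    + rewrite Hni in *. rewrite Hdd in *.
      exists (S i), (s 6), (Cons t ds''). split; [lia|]. split; [reflexivity|]. split; [reflexivity|].
      assert (Hmem2 : forall j, 1 <= j <= S i -> member (num j) cs).
      { intros j Hj. destruct (Nat.eq_dec j (S i)) as [->|].
        - exists (S k0). exact Hc.
        - apply Hmem; lia. }
      split; [exact Hmem2|].
      intros Hdist. specialize (Hcor Hdist) as [_ [_ [_ [Hup [Hdn [Hupk Hdnk]]]]]].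
      set (P := S k0) in *.
      assert (Xup : forall j k, 1 <= j <= i -> kth_member k (num j) cs ->
                 up_diag k j (S i) <> up_diag P (S i) (S i)).
      { intros j k Hj Hk Heq. unfold up_diag in Heq.
        assert (Hpz : (0 < up_diag k j i)%Z) by (unfold up_diag; lia).
        specialize (Hupk j k Hj Hk Hpz).
        replace (Z.to_nat (up_diag k j i)) with (S (S k0)) in Hupk by (unfold up_diag; lia).
        apply (proj1 (kthSS _ _ _ _)) in Hupk.
        assert (num j = num (S i)) by (eapply kth_fun; [exact Hupk | exact Hu]).
        apply num_inj in H. lia. }
      assert (Xdn : forall j k, 1 <= j <= i -> kth_member k (num j) cs ->
                 down_diag k j (S i) <> down_diag P (S i) (S i)).
      { intros j k Hj Hk Heq. unfold down_diag in Heq.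
        pose proof (kth_pos _ _ _ Hk).
        assert (Hpz : (0 < down_diag k j i)%Z) by (unfold down_diag; lia).
        specialize (Hdnk j k Hj Hk Hpz).
        destruct k0 as [|k1]. { unfold P in Heq. lia. }
        replace (Z.to_nat (down_diag k j i)) with (S k1) in Hdnk by (unfold down_diag; lia).
        apply (proj2 (kthSS k1 _ t _)) in Hdnk.
        assert (num j = num (S i)) by (eapply kth_fun; [exact Hdnk | exact Hd]).
        apply num_inj in H0. lia. }
      split; [lia|]. split; [exact Hdist|]. split; [exact Hmem2|].
      split.
      { intros j j' k k' Hj Hj' Hne Hk Hk'.
        destruct (Nat.eq_dec j (S i)) as [->|Hji].
        - assert (k = P) by (eapply dist_pos; eauto). subst k.
          intro E. apply (Xup j' k'); [lia|exact Hk'|]. congruence.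
        - destruct (Nat.eq_dec j' (S i)) as [->|Hji'].
          + assert (k' = P) by (eapply dist_pos; eauto). subst k'.
            apply (Xup j k); [lia|exact Hk].
          + specialize (Hup j j' k k' ltac:(lia) ltac:(lia) Hne Hk Hk').
            unfold up_diag in *. lia. }
      split.
      { intros j j' k k' Hj Hj' Hne Hk Hk'.
        destruct (Nat.eq_dec j (S i)) as [->|Hji].
        - assert (k = P) by (eapply dist_pos; eauto). subst k.
          intro E. apply (Xdn j' k'); [lia|exact Hk'|]. congruence.
        - destruct (Nat.eq_dec j' (S i)) as [->|Hji'].
          + assert (k' = P) by (eapply dist_pos; eauto). subst k'.
            apply (Xdn j k); [lia|exact Hk].
          + specialize (Hdn j j' k k' ltac:(lia) ltac:(lia) Hne Hk Hk').
            unfold down_diag in *. lia. }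
      split.
      { intros j k Hj Hk Hp.
        destruct (Nat.eq_dec j (S i)) as [->|Hji].
        - assert (k = P) by (eapply dist_pos; eauto). subst k.
          unfold up_diag. replace (Z.to_nat _) with P by lia. exact Hu.
        - assert (Hp' : (0 < up_diag k j i)%Z) by (unfold up_diag in *; lia).
          specialize (Hupk j k ltac:(lia) Hk Hp').
          destruct (Z.to_nat (up_diag k j (S i))) as [|m] eqn:Em.
          + unfold up_diag in *. lia.
          + replace (Z.to_nat (up_diag k j i)) with (S (S m)) in Hupk by (unfold up_diag in *; lia).
            now apply (proj1 (kthSS _ _ _ _)) in Hupk. }
      { intros j k Hj Hk Hp.
        destruct (Nat.eq_dec j (S i)) as [->|Hji].
        - assert (k = P) by (eapply dist_pos; eauto). subst k.
          unfold down_diag. replace (Z.to_nat _) with P by lia. exact Hd.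
        - pose proof (kth_pos _ _ _ Hk).
          assert (Hp' : (0 < down_diag k j i)%Z) by (unfold down_diag in *; lia).
          specialize (Hdnk j k ltac:(lia) Hk Hp').
          destruct (Z.to_nat (down_diag k j i)) as [|m] eqn:Em.
          + unfold down_diag in *. lia.
          + replace (Z.to_nat (down_diag k j (S i))) with (S (S m)) by (unfold down_diag in *; lia).
            exact (proj2 (kthSS _ _ _ _) Hdnk). }
  - left. split; [simpl; auto|]. exists 0. split; [|split]; apply kth1.
  - assert (B := Hb _ (or_introl eq_refl)). simpl in B.
    destruct B as [[_ [k [H1 [H2 H3]]]] | [_ []]].
    left. split; [simpl; auto|]. exists (S k). split; [|split]; apply (proj2 (kthSS _ _ _ _)); assumption.
Qed.

Theorem mainTheorem3 :
  (forall (n : nat) (cs' us' ds' : term),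
     0 < n ->
     is_list_of_length cs' n ->
     (forall sigma, ground_subst sigma ->
        in_S (subst_atom sigma (Pqs (num n) cs' us' ds'))) ->
     nqueens_conclusion cs' n)
  /\
  (forall (n : nat) (vs : list nat) (x y : nat),
     0 < n -> length vs = n -> NoDup vs ->
     x <> y -> ~ In x vs -> ~ In y vs ->
     forall cs' us' ds',
       answer NQUEENS (Pqs (num n) cs' us' ds') ->
       instance_of (Pqs (num n) cs' us' ds')
                   (Pqs (num n) (lst (map Var vs) Nil) (Var x) (Var y)) ->
       nqueens_conclusion cs' n).
Proof.
  split; [exact part1|].
  intros n vs x y Hn Hl _ _ _ _ cs us ds Hans [tau Htau].
  apply (part1 n cs us ds Hn).
  - simpl in Htau. injection Htau as _ Hcs _ _. rewrite Hcs, subst_lst, map_map.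
    exists (map (fun v => subst tau (Var v)) vs). split.
    + now rewrite length_map.
    + reflexivity.
  - intros sigma Hs. exact (Hans in_S S_model sigma Hs).
Qed.
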